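(* Let $k\ge1$, $N\ge 1$, $h=1/N$, and let $\tilde u:[0,T]\to\mathcal{V}_h^k$ be a continuously differentiable solution of the semi-discrete problem $$(\tilde u_t,\chi)+(P[\tilde u_{xt}],\chi_x)=(P[\tilde u+\tfrac12\tilde u^2],\chi_x)\quad\text{for all }\chi\in\mathcal{V}_h^k,\ t\in[0,T].$$ Then the mass $\mathcal{M}(t;\tilde u)=\int_0^1\tilde u\,dx$ and the energy $\mathcal{E}(t;\tilde u)=\frac12\int_0^1\big(\tilde u^2+\tfrac13\tilde u^3\big)\,dx$ satisfy $\frac{d}{dt}\mathcal{M}(t;\tilde u)=0$ and $\frac{d}{dt}\mathcal{E}(t;\tilde u)=0$.
   Context: $C_p$ is the space of continuous $1$-periodic real functions; $x_i=ih$; $\mathcal{V}_h^k=\{\phi\in C_p:\ \phi|_{[x_{i-1},x_i]}\text{ is a polynomial of degree}\le k,\ i=1,\dots,N\}$. $(\cdot,\cdot)$ is the $L^2(0,1)$ inner product and $P$ the $L^2(0,1)$-orthogonal projection onto $\mathcal{V}_h^k$. Subscripts $x,t$ denote (piecewise) spatial and time derivatives. *)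

(* Defs.v *)
From Stdlib Require Import Reals List.
From Coquelicot Require Import Coquelicot.
Open Scope R_scope.

(* Horner evaluation of a polynomial given by its coefficient list
   [a0; a1; ...; an]  ->  a0 + a1 x + ... + an x^n. *)
Definition peval (l : list R) (x : R) : R :=
  fold_right (fun a acc => a + x * acc) 0 l.

Definition node (N i : nat) : R := INR i / INR N.

Definition in_Vh (N k : nat) (v : R -> R) : Prop :=
  (forall x, continuous v x) /\
  (forall x, v (x + 1) = v x) /\
  (forall i : nat, (1 <= i <= N)%nat ->
     exists l : list R, (length l <= k + 1)%nat /\
       forall x, node N (i - 1) <= x <= node N i -> v x = peval l x).

Definition ip (f g : R -> R) : R := RInt (fun x => f x * g x) 0 1.

Definition is_L2proj (N k : nat) (f p : R -> R) : Prop :=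
  in_Vh N k p /\ forall chi, in_Vh N k chi -> ip p chi = ip f chi.

(* Derivative of f at t relative to the set D (one-sided at endpoints of an
   interval): the difference quotient tends to l as s -> t, s in D, s <> t. *)
Definition deriv_within (D : R -> Prop) (f : R -> R) (t l : R) : Prop :=
  filterlim (fun s => (f s - f t) / (s - t))
    (within (fun s => D s /\ s <> t) (locally t)) (locally l).

Definition cont_within (D : R -> Prop) (f : R -> R) (t : R) : Prop :=
  filterlim f (within D (locally t)) (locally (f t)).

Definition mass (v : R -> R) : R := RInt v 0 1.
Definition energy (v : R -> R) : R :=
  / 2 * RInt (fun x => v x ^ 2 + / 3 * v x ^ 3) 0 1.

(* Main.v *)
Require Import Defs.
From Stdlib Require Import Reals List Lra Lia ClassicalEpsilon FinFun.
From Coquelicot Require Import Coquelicot.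
Open Scope R_scope.

Lemma peval_nil x : peval nil x = 0. Proof. reflexivity. Qed.
Lemma peval_cons a l x : peval (a :: l) x = a + x * peval l x. Proof. reflexivity. Qed.

Fixpoint sdiv (c : R) (l : list R) : list R :=
  match l with
  | nil => nil
  | a :: l' => match l' with nil => nil | _ :: _ => peval l' c :: sdiv c l' end
  end.

Lemma sdiv_spec c l x : peval l x = peval l c + (x - c) * peval (sdiv c l) x.
Proof.
  induction l as [|a l IH].
  - unfold peval; simpl; ring.
  - destruct l as [|b l'].
    + simpl sdiv. rewrite !peval_cons, !peval_nil. ring.
    + change (sdiv c (a :: b :: l')) with (peval (b :: l') c :: sdiv c (b :: l')).
      rewrite (peval_cons a (b :: l') x), (peval_cons a (b :: l') c).
      rewrite (peval_cons (peval (b :: l') c)).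
      rewrite IH. ring.
Qed.

Lemma sdiv_length c l : length (sdiv c l) = pred (length l).
Proof.
  induction l as [|a l IH]; [reflexivity|].
  destruct l as [|b l']; [reflexivity|].
  change (sdiv c (a :: b :: l')) with (peval (b :: l') c :: sdiv c (b :: l')).
  simpl length. simpl length in IH. rewrite IH. reflexivity.
Qed.

Lemma length0_nil {A} (l : list A) : (length l <= 0)%nat -> l = nil.
Proof. destruct l; simpl; intros; [reflexivity| lia]. Qed.

Lemma unif_poly {T} (F : (T -> Prop) -> Prop) {FF : Filter F} (n : nat) :
  forall (L : T -> list R) (xs : list R) (B : R), 0 <= B ->
  F (fun s => (length (L s) <= n)%nat) -> length xs = n -> NoDup xs ->
  (forall c, In c xs -> forall eps, 0 < eps -> F (fun s => Rabs (peval (L s) c) < eps)) ->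
  forall eps, 0 < eps -> F (fun s => forall x, Rabs x <= B -> Rabs (peval (L s) x) < eps).
Proof.
  induction n as [|n IH]; intros L xs B HB HL Hxs Hnd Hc eps Heps.
  - apply (filter_imp (fun s => (length (L s) <= 0)%nat)); [|exact HL].
    intros s Hs x _. rewrite (length0_nil _ Hs), peval_nil, Rabs_R0. exact Heps.
  - destruct xs as [|c xs']; [discriminate|].
    simpl in Hxs. injection Hxs as Hxs.
    inversion Hnd as [|c0 xs0 Hnin Hnd']; subst.
    set (L' := fun s => sdiv c (L s)).
    set (K := B + Rabs c + 1).
    assert (HK : 0 < K) by (unfold K; pose proof (Rabs_pos c); lra).
    set (e1 := eps / (2 * K)).
    assert (He1 : 0 < e1) by (unfold e1; apply Rdiv_lt_0_compat; lra).
    assert (IH' := IH L' xs' B HB).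
    assert (H1 : F (fun s => forall x, Rabs x <= B -> Rabs (peval (L' s) x) < e1)).
    { apply IH'; auto.
      - apply (filter_imp (fun s => (length (L s) <= S (length xs'))%nat)); [|exact HL].
        intros s Hs. unfold L'. rewrite sdiv_length. lia.
      - intros c' Hc' e He.
        assert (Hne : c' - c <> 0) by (intro E; apply Hnin; replace c with c' by lra; exact Hc').
        assert (Hd : 0 < Rabs (c' - c)) by (apply Rabs_pos_lt; exact Hne).
        assert (Hq : 0 < e * Rabs (c' - c) / 2) by (apply Rdiv_lt_0_compat; [apply Rmult_lt_0_compat|]; lra).
        pose proof (Hc c' (or_intror Hc') _ Hq) as A1.
        pose proof (Hc c (or_introl eq_refl) _ Hq) as A2.
        apply (filter_imp _ _ (fun s H => H) ) in A1.
        generalize (filter_and _ _ A1 A2). apply filter_imp.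
        intros s [B1 B2]. unfold L'.
        pose proof (sdiv_spec c (L s) c') as S.
        assert (E : peval (sdiv c (L s)) c' = (peval (L s) c' - peval (L s) c) / (c' - c)) by (rewrite S; field; exact Hne).
        rewrite E. unfold Rdiv. rewrite Rabs_mult, Rabs_inv.
        apply (Rmult_lt_reg_r (Rabs (c' - c))); [exact Hd|].
        rewrite Rmult_assoc, Rinv_l by lra. rewrite Rmult_1_r.
        eapply Rle_lt_trans; [apply Rabs_triang|]. rewrite Rabs_Ropp. lra. }
    assert (Hq : 0 < eps / 2) by lra.
    pose proof (Hc c (or_introl eq_refl) _ Hq) as A2.
    generalize (filter_and _ _ H1 A2). apply filter_imp.
    intros s [B1 B2] x Hx.
    rewrite (sdiv_spec c (L s) x).
    eapply Rle_lt_trans; [apply Rabs_triang|]. rewrite Rabs_mult.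
    assert (Hxc : Rabs (x - c) <= K).
    { unfold K. eapply Rle_trans; [apply Rabs_triang|]. rewrite Rabs_Ropp. lra. }
    assert (Hb := B1 x Hx). fold (L' s).
    assert (Rabs (x - c) * Rabs (peval (L' s) x) <= K * e1).
    { apply Rmult_le_compat; try apply Rabs_pos; lra. }
    assert (K * e1 = eps / 2) by (unfold e1; field; lra). lra.
Qed.

Fixpoint ladd (l1 l2 : list R) : list R :=
  match l1, l2 with
  | nil, _ => l2
  | _, nil => l1
  | a :: l1', b :: l2' => (a + b) :: ladd l1' l2'
  end.

Lemma ladd_spec l1 l2 x : peval (ladd l1 l2) x = peval l1 x + peval l2 x.
Proof.
  revert l2; induction l1 as [|a l1 IH]; intros [|b l2].
  - unfold peval; simpl; ring.
  - unfold peval at 2; simpl; ring.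
  - unfold peval at 3; simpl; ring.
  - simpl ladd. rewrite !peval_cons, IH. ring.
Qed.

Lemma ladd_length l1 l2 n : (length l1 <= n)%nat -> (length l2 <= n)%nat -> (length (ladd l1 l2) <= n)%nat.
Proof.
  revert l2 n; induction l1 as [|a l1 IH]; intros [|b l2] n H1 H2; simpl in *; auto.
  destruct n; [lia|]. specialize (IH l2 n). lia.
Qed.

Definition lscal (c : R) (l : list R) : list R := map (Rmult c) l.

Lemma lscal_spec c l x : peval (lscal c l) x = c * peval l x.
Proof.
  induction l as [|a l IH].
  - unfold peval; simpl; ring.
  - unfold lscal in *. simpl map. rewrite !peval_cons, IH. ring.
Qed.

Lemma lscal_length c l : length (lscal c l) = length l.
Proof. apply length_map. Qed.

Lemma cell_unif {T} (F : (T -> Prop) -> Prop) {FF : Filter F} (E : T -> R -> R) a b n :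
  a < b ->
  F (fun s => exists l, (length l <= S n)%nat /\ forall x, a <= x <= b -> E s x = peval l x) ->
  (forall c, a <= c <= b -> forall eps, 0 < eps -> F (fun s => Rabs (E s c) < eps)) ->
  forall eps, 0 < eps -> F (fun s => forall x, a <= x <= b -> Rabs (E s x) < eps).
Proof.
  intros Hab HP Hc eps Heps.
  set (Pr := fun s l => (length l <= S n)%nat /\ forall x, a <= x <= b -> E s x = peval l x).
  set (L := fun s => epsilon (inhabits (@nil R)) (Pr s)).
  assert (HL : F (fun s => Pr s (L s))).
  { apply (filter_imp _ _ (fun s H => epsilon_spec (inhabits (@nil R)) (Pr s) H)). exact HP. }
  set (h := (b - a) / INR (S n)).
  assert (Hh : 0 < h) by (unfold h; apply Rdiv_lt_0_compat; [lra| apply lt_0_INR; lia]).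
  set (xs := map (fun j => a + INR j * h) (seq 0 (S n))).
  assert (Hxs : forall c, In c xs -> a <= c <= b).
  { intros c Hc'. unfold xs in Hc'. apply in_map_iff in Hc'. destruct Hc' as [j [<- Hj]].
    apply in_seq in Hj.
    assert (0 <= INR j) by apply pos_INR.
    assert (INR j <= INR (S n)) by (apply le_INR; lia).
    assert (INR j * h <= INR (S n) * h) by (apply Rmult_le_compat_r; lra).
    assert (INR (S n) * h = b - a) by (unfold h; field; apply not_0_INR; lia).
    split; [|lra]. assert (0 <= INR j * h) by (apply Rmult_le_pos; lra). lra. }
  assert (Hnd : NoDup xs).
  { unfold xs. apply Injective_map_NoDup; [|apply seq_NoDup].
    intros i j Eij. apply INR_eq. apply (Rmult_eq_reg_r h); [|lra]. lra. }
  assert (HB : 0 <= Rabs a + Rabs b) by (pose proof (Rabs_pos a); pose proof (Rabs_pos b); lra).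
  assert (U := unif_poly F (S n) L xs (Rabs a + Rabs b) HB).
  assert (U' : F (fun s => forall x, Rabs x <= Rabs a + Rabs b -> Rabs (peval (L s) x) < eps)).
  { apply U; auto.
    - apply (filter_imp (fun s => Pr s (L s))); [intros s H; exact (proj1 H)| exact HL].
    - unfold xs. rewrite length_map, length_seq. reflexivity.
    - intros c Hc' e He. generalize (filter_and _ _ HL (Hc c (Hxs c Hc') e He)). apply filter_imp.
      intros s [[_ H1] H2]. rewrite <- H1; auto. }
  generalize (filter_and _ _ HL U'). apply filter_imp.
  intros s [[_ H1] H2] x Hx. rewrite H1 by auto. apply H2.
  unfold Rabs; repeat destruct Rcase_abs; lra.
Qed.

Definition UC (F : (R -> Prop) -> Prop) (Fs : R -> R -> R) (h : R -> R) :=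
  forall eps, 0 < eps -> F (fun s => forall x, 0 <= x <= 1 -> Rabs (Fs s x - h x) < eps).

Definition bnd (h : R -> R) := exists M, forall x, 0 <= x <= 1 -> Rabs (h x) <= M.

Section UCS.
Context (F : (R -> Prop) -> Prop) {FF : Filter F}.

Lemma UC_ext Fs Gs h : F (fun s => forall x, 0 <= x <= 1 -> Fs s x = Gs s x) -> UC F Fs h -> UC F Gs h.
Proof.
  intros HE HU eps He. generalize (filter_and _ _ HE (HU eps He)). apply filter_imp.
  intros s [H1 H2] x Hx. rewrite <- H1 by auto. auto.
Qed.

Lemma UC_ext_h Fs h h' : (forall x, 0 <= x <= 1 -> h x = h' x) -> UC F Fs h -> UC F Fs h'.
Proof.
  intros HE HU eps He. apply (filter_imp _ _ (fun s H x Hx => eq_ind _ (fun y => Rabs (Fs s x - y) < eps) (H x Hx) _ (HE x Hx)) (HU eps He)).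
Qed.

Lemma UC_const (h : R -> R) : UC F (fun _ => h) h.
Proof.
  intros eps He. apply filter_forall. intros s x _. unfold Rminus. rewrite Rplus_opp_r, Rabs_R0. exact He.
Qed.

Lemma UC_plus f g h1 h2 : UC F f h1 -> UC F g h2 -> UC F (fun s x => f s x + g s x) (fun x => h1 x + h2 x).
Proof.
  intros U1 U2 eps He. assert (0 < eps / 2) by lra.
  generalize (filter_and _ _ (U1 _ H) (U2 _ H)). apply filter_imp.
  intros s [A B] x Hx. specialize (A x Hx). specialize (B x Hx).
  replace (f s x + g s x - (h1 x + h2 x)) with ((f s x - h1 x) + (g s x - h2 x)) by ring.
  eapply Rle_lt_trans; [apply Rabs_triang|]. lra.
Qed.

Lemma UC_mult f g h1 h2 : UC F f h1 -> UC F g h2 -> bnd h1 -> bnd h2 ->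
  UC F (fun s x => f s x * g s x) (fun x => h1 x * h2 x).
Proof.
  intros U1 U2 [M1 B1] [M2 B2] eps He.
  set (K := Rabs M1 + Rabs M2 + 1).
  assert (HK : 0 < K) by (unfold K; pose proof (Rabs_pos M1); pose proof (Rabs_pos M2); lra).
  set (e := Rmin 1 (eps / (2 * K))).
  assert (He1 : 0 < e) by (unfold e; apply Rmin_pos; [lra| apply Rdiv_lt_0_compat; lra]).
  assert (He2 : e <= 1) by apply Rmin_l.
  assert (He3 : e * K <= eps / 2).
  { assert (e <= eps / (2 * K)) by apply Rmin_r.
    apply (Rmult_le_compat_r K) in H; [|lra]. replace (eps / (2 * K) * K) with (eps / 2) in H by (field; lra). lra. }
  generalize (filter_and _ _ (U1 _ He1) (U2 _ He1)). apply filter_imp.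
  intros s [A B] x Hx. specialize (A x Hx). specialize (B x Hx).
  specialize (B1 x Hx). specialize (B2 x Hx).
  replace (f s x * g s x - h1 x * h2 x) with ((f s x - h1 x) * g s x + h1 x * (g s x - h2 x)) by ring.
  eapply Rle_lt_trans; [apply Rabs_triang|]. rewrite !Rabs_mult.
  assert (Hg : Rabs (g s x) <= Rabs M2 + 1).
  { replace (g s x) with ((g s x - h2 x) + h2 x) by ring. eapply Rle_trans; [apply Rabs_triang|].
    pose proof (Rle_abs M2). lra. }
  assert (C1 : Rabs (f s x - h1 x) * Rabs (g s x) <= e * (Rabs M2 + 1)).
  { apply Rmult_le_compat; try apply Rabs_pos; lra. }
  assert (C2 : Rabs (h1 x) * Rabs (g s x - h2 x) <= Rabs M1 * e).
  { pose proof (Rle_abs M1). apply Rmult_le_compat; try apply Rabs_pos; lra. }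
  assert (e * K = e * (Rabs M2 + 1) + Rabs M1 * e) by (unfold K; ring). lra.
Qed.

Lemma bnd_const c : bnd (fun _ => c).
Proof. exists (Rabs c). intros; lra. Qed.

Lemma bnd_plus h1 h2 : bnd h1 -> bnd h2 -> bnd (fun x => h1 x + h2 x).
Proof. intros [M1 B1] [M2 B2]. exists (M1 + M2). intros x Hx. eapply Rle_trans; [apply Rabs_triang|].
  specialize (B1 x Hx); specialize (B2 x Hx); lra. Qed.

Lemma bnd_mult h1 h2 : bnd h1 -> bnd h2 -> bnd (fun x => h1 x * h2 x).
Proof. intros [M1 B1] [M2 B2]. exists (M1 * M2). intros x Hx. rewrite Rabs_mult.
  specialize (B1 x Hx); specialize (B2 x Hx). apply Rmult_le_compat; try apply Rabs_pos; lra. Qed.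

Lemma bnd_cont h : (forall x, continuous h x) -> bnd h.
Proof.
  intros Hc.
  destruct (continuity_ab_maj (fun x => Rabs (h x)) 0 1) as [Mx [HM _]].
  - lra.
  - intros c _. apply continuity_pt_comp with (f2 := Rabs). apply continuity_pt_filterlim. apply Hc.
    apply Rcontinuity_abs.
  - exists (Rabs (h Mx)). exact HM.
Qed.

Lemma int_lim Fs h : UC F Fs h -> F (fun s => ex_RInt (Fs s) 0 1) -> ex_RInt h 0 1 ->
  filterlim (fun s => RInt (Fs s) 0 1) F (locally (RInt h 0 1)).
Proof.
  intros U HE Hh. apply filterlim_locally. intros eps.
  assert (He : 0 < eps / 2) by (destruct eps; simpl; lra).
  generalize (filter_and _ _ HE (U _ He)). apply filter_imp.
  intros s [A B].
  unfold ball; simpl; unfold AbsRing_ball, abs, minus, plus, opp; simpl.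
  assert (E := RInt_minus (Fs s) h 0 1 A Hh).
  unfold minus, plus, opp in E; simpl in E.
  change (Rabs (RInt (Fs s) 0 1 + - RInt h 0 1) < eps).
  rewrite <- E.
  eapply Rle_lt_trans.
  - apply (abs_RInt_le_const _ 0 1 (eps / 2)); [lra| |].
    + apply (ex_RInt_minus (V := R_NormedModule)); auto.
    + intros x Hx. apply Rlt_le. apply B. exact Hx.
  - destruct eps; simpl in *; lra.
Qed.

End UCS.

Lemma node_0 N : node N 0 = 0.
Proof. unfold node. simpl. unfold Rdiv. ring. Qed.

Lemma node_N N : (1 <= N)%nat -> node N N = 1.
Proof. intros. unfold node. field. apply not_0_INR. lia. Qed.

Lemma node_lt N i j : (1 <= N)%nat -> (i < j)%nat -> node N i < node N j.
Proof.
  intros HN Hij. unfold node, Rdiv. apply Rmult_lt_compat_r.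
  - apply Rinv_0_lt_compat, lt_0_INR. lia.
  - apply lt_INR. exact Hij.
Qed.

Lemma node_le N i j : (1 <= N)%nat -> (i <= j)%nat -> node N i <= node N j.
Proof.
  intros HN Hij. destruct (Nat.eq_dec i j) as [->|]; [lra|]. apply Rlt_le, node_lt; lia.
Qed.

Lemma cover N m : (1 <= N)%nat -> (1 <= m)%nat -> forall x, 0 <= x <= node N m ->
  exists i, (1 <= i <= m)%nat /\ node N (i - 1) <= x <= node N i.
Proof.
  intros HN. induction m as [|m IH]; intros Hm x Hx; [lia|].
  destruct (Rle_lt_dec x (node N m)) as [H|H].
  - destruct m as [|m].
    + exists 1%nat. split; [lia|]. simpl. rewrite node_0 in *. lra.
    + destruct (IH ltac:(lia) x ltac:(lra)) as [i [Hi Hx']]. exists i. split; [lia|exact Hx'].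
  - exists (S m). split; [lia|]. replace (S m - 1)%nat with m by lia. lra.
Qed.

Lemma filter_fin {T} (F : (T -> Prop) -> Prop) {FF : Filter F} (P : nat -> T -> Prop) m :
  (forall i, (1 <= i <= m)%nat -> F (P i)) -> F (fun s => forall i, (1 <= i <= m)%nat -> P i s).
Proof.
  induction m as [|m IH]; intros H.
  - apply filter_forall. intros; lia.
  - assert (A := IH (fun i Hi => H i ltac:(lia))).
    generalize (filter_and _ _ A (H (S m) ltac:(lia))). apply filter_imp.
    intros s [B C] i Hi. destruct (Nat.eq_dec i (S m)) as [->|]; auto. apply B. lia.
Qed.

Lemma UC_cells (F : (R -> Prop) -> Prop) {FF : Filter F} N (E : R -> R -> R) : (1 <= N)%nat ->
  (forall i, (1 <= i <= N)%nat -> forall eps, 0 < eps ->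
     F (fun s => forall x, node N (i - 1) <= x <= node N i -> Rabs (E s x) < eps)) ->
  forall eps, 0 < eps -> F (fun s => forall x, 0 <= x <= 1 -> Rabs (E s x) < eps).
Proof.
  intros HN H eps He.
  generalize (filter_fin F _ N (fun i Hi => H i Hi eps He)). apply filter_imp.
  intros s Hs x Hx. rewrite <- (node_N N HN) in Hx.
  destruct (cover N N HN HN x Hx) as [i [Hi Hx']]. exact (Hs i Hi x Hx').
Qed.

Fixpoint dpe (l : list R) (x : R) : R :=
  match l with nil => 0 | a :: l' => peval l' x + x * dpe l' x end.

Lemma peval_derive l x : is_derive (peval l) x (dpe l x).
Proof.
  apply is_derive_Reals.
  induction l as [|a l IH].
  - simpl. apply (derivable_pt_lim_const 0).
  - simpl dpe.
    replace (peval l x + x * dpe l x) with (0 + (1 * peval l x + x * dpe l x)) by ring.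
    apply (derivable_pt_lim_plus (fun _ => a) (fun y => y * peval l y)).
    + apply derivable_pt_lim_const.
    + apply (derivable_pt_lim_mult (fun y => y) (peval l)); [apply derivable_pt_lim_id| exact IH].
Qed.

Lemma peval_cont l x : continuous (peval l) x.
Proof. apply continuity_pt_filterlim. apply derivable_continuous_pt. exists (dpe l x).
  apply is_derive_Reals, peval_derive. Qed.

Lemma dpe_cont l x : continuous (dpe l) x.
Proof.
  induction l as [|a l IH].
  - simpl. apply continuity_pt_filterlim. apply continuity_pt_const. intros u v; reflexivity.
  - simpl dpe. apply (continuous_plus (peval l) (fun y => y * dpe l y)); [apply peval_cont|].
    apply (continuous_mult (fun y => y) (dpe l)); [apply continuous_id| exact IH].
Qed.

Lemma loc_in a b x : a < x < b -> locally x (fun y => a < y < b).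
Proof.
  intros Hx. assert (H : 0 < Rmin (x - a) (b - x)) by (apply Rmin_pos; lra).
  exists (mkposreal _ H). intros y Hy.
  unfold ball in Hy; simpl in Hy; unfold AbsRing_ball, abs, minus, plus, opp in Hy; simpl in Hy.
  apply Rabs_def2 in Hy. pose proof (Rmin_l (x - a) (b - x)). pose proof (Rmin_r (x - a) (b - x)). lra.
Qed.

Lemma Derive_cell (phi : R -> R) l a b x : (forall y, a <= y <= b -> phi y = peval l y) -> a < x < b ->
  Derive phi x = dpe l x.
Proof.
  intros Hp Hx. rewrite (Derive_ext_loc phi (peval l)).
  - apply is_derive_unique, peval_derive.
  - apply (filter_imp (fun y => a < y < b)); [|apply loc_in; exact Hx].
    intros y Hy. apply Hp. lra.
Qed.

Lemma cell_ibp (phi psi : R -> R) p r a b : a < b ->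
  (forall y, a <= y <= b -> phi y = peval p y) -> (forall y, a <= y <= b -> psi y = peval r y) ->
  ex_RInt (fun x => Derive phi x * psi x) a b /\ ex_RInt (fun x => phi x * Derive psi x) a b /\
  RInt (fun x => Derive phi x * psi x) a b + RInt (fun x => phi x * Derive psi x) a b
   = phi b * psi b - phi a * psi a.
Proof.
  intros Hab Hp Hr.
  assert (E1 : forall x, Rmin a b < x < Rmax a b -> dpe p x * peval r x = Derive phi x * psi x).
  { intros x Hx. rewrite Rmin_left, Rmax_right in Hx by lra.
    rewrite (Derive_cell phi p a b x), Hr by (auto; lra). reflexivity. }
  assert (E2 : forall x, Rmin a b < x < Rmax a b -> peval p x * dpe r x = phi x * Derive psi x).
  { intros x Hx. rewrite Rmin_left, Rmax_right in Hx by lra.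
    rewrite (Derive_cell psi r a b x), Hp by (auto; lra). reflexivity. }
  assert (C1 : ex_RInt (fun x => dpe p x * peval r x) a b).
  { apply (ex_RInt_continuous (V := R_CompleteNormedModule)). intros. apply (continuous_mult (dpe p) (peval r)); [apply dpe_cont|apply peval_cont]. }
  assert (C2 : ex_RInt (fun x => peval p x * dpe r x) a b).
  { apply (ex_RInt_continuous (V := R_CompleteNormedModule)). intros. apply (continuous_mult (peval p) (dpe r)); [apply peval_cont|apply dpe_cont]. }
  split; [exact (ex_RInt_ext _ _ _ _ E1 C1)|].
  split; [exact (ex_RInt_ext _ _ _ _ E2 C2)|].
  rewrite <- (RInt_ext _ _ _ _ E1), <- (RInt_ext _ _ _ _ E2).
  assert (I := is_RInt_derive (fun x => peval p x * peval r x)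
                 (fun x => dpe p x * peval r x + peval p x * dpe r x) a b).
  assert (J : RInt (fun x => dpe p x * peval r x + peval p x * dpe r x) a b
              = phi b * psi b - phi a * psi a).
  { apply is_RInt_unique. rewrite (Hp a), (Hp b), (Hr a), (Hr b) by lra. apply I.
    - intros x _. apply (is_derive_mult (peval p) (peval r)); [apply peval_derive|apply peval_derive| intros; apply Rmult_comm].
    - intros x _. apply (continuous_plus (fun x => dpe p x * peval r x) (fun x => peval p x * dpe r x)).
      + apply (continuous_mult (dpe p) (peval r)); [apply dpe_cont|apply peval_cont].
      + apply (continuous_mult (peval p) (dpe r)); [apply peval_cont|apply dpe_cont]. }
  rewrite <- J. symmetry. apply (RInt_plus (V := R_CompleteNormedModule)); auto.
Qed.

Lemma skew N k phi psi : (1 <= N)%nat -> in_Vh N k phi -> in_Vh N k psi ->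
  ip (Derive phi) psi = - ip phi (Derive psi).
Proof.
  intros HN [_ [Pp Cp]] [_ [Pr Cr]].
  set (f1 := fun x => Derive phi x * psi x).
  set (f2 := fun x => phi x * Derive psi x).
  assert (H : forall m, (m <= N)%nat ->
    ex_RInt f1 0 (node N m) /\ ex_RInt f2 0 (node N m) /\
    RInt f1 0 (node N m) + RInt f2 0 (node N m) = phi (node N m) * psi (node N m) - phi 0 * psi 0).
  { induction m as [|m IH]; intros Hm.
    - rewrite node_0. split; [apply ex_RInt_point|]. split; [apply ex_RInt_point|].
      rewrite !RInt_point. unfold zero; simpl. ring.
    - destruct (IH ltac:(lia)) as [A1 [A2 A3]].
      destruct (Cp (S m) ltac:(lia)) as [p [_ Hp]].
      destruct (Cr (S m) ltac:(lia)) as [r [_ Hr]].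
      replace (S m - 1)%nat with m in Hp, Hr by lia.
      destruct (cell_ibp phi psi p r (node N m) (node N (S m)) (node_lt N m (S m) HN ltac:(lia)) Hp Hr)
        as [B1 [B2 B3]].
      fold f1 f2 in B1, B2, B3.
      split; [apply (ex_RInt_Chasles f1 _ (node N m)); auto|].
      split; [apply (ex_RInt_Chasles f2 _ (node N m)); auto|].
      rewrite <- (RInt_Chasles f1 0 (node N m)) by auto.
      rewrite <- (RInt_Chasles f2 0 (node N m)) by auto.
      unfold plus; simpl. lra. }
  destruct (H N (le_n N)) as [_ [_ E]].
  rewrite node_N in E by exact HN.
  assert (Q1 : phi 1 = phi 0) by (rewrite <- (Pp 0); f_equal; ring).
  assert (Q2 : psi 1 = psi 0) by (rewrite <- (Pr 0); f_equal; ring).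
  rewrite Q1, Q2 in E.
  unfold ip. fold f1 f2. lra.
Qed.

Lemma ip_sym f g : ip f g = ip g f.
Proof. unfold ip. apply RInt_ext. intros; apply Rmult_comm. Qed.

Lemma skew_self N k phi : (1 <= N)%nat -> in_Vh N k phi -> ip phi (Derive phi) = 0.
Proof. intros HN H. pose proof (skew N k phi phi HN H H). rewrite ip_sym in H0. lra. Qed.

Lemma ip_Dconst f c : ip f (Derive (fun _ => c)) = 0.
Proof.
  unfold ip. rewrite (RInt_ext _ (fun _ => 0)).
  - rewrite RInt_const. unfold scal; simpl. exact (Rmult_0_r _).
  - intros x _. rewrite Derive_const. exact (Rmult_0_r _).
Qed.

Lemma const_Vh N k c : in_Vh N k (fun _ => c).
Proof.
  split; [intros x; apply continuity_pt_filterlim; apply continuity_pt_const; intros u v; reflexivity|].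
  split; [reflexivity|].
  intros i _. exists (c :: nil). split; [simpl; lia|]. intros x _. unfold peval; simpl; ring.
Qed.

Lemma ex_cont (f : R -> R) : (forall x, continuous f x) -> ex_RInt f 0 1.
Proof. intros H. apply (ex_RInt_continuous (V := R_CompleteNormedModule)). intros; apply H. Qed.

Lemma ex_RInt_lin (f g : R -> R) c : ex_RInt f 0 1 -> ex_RInt g 0 1 -> ex_RInt (fun x => c * (f x - g x)) 0 1.
Proof.
  intros Hf Hg. apply (ex_RInt_scal (V := R_NormedModule)). apply (ex_RInt_minus (V := R_NormedModule)); auto.
Qed.

Lemma RInt_lin (f g : R -> R) c : ex_RInt f 0 1 -> ex_RInt g 0 1 ->
  RInt (fun x => c * (f x - g x)) 0 1 = c * (RInt f 0 1 - RInt g 0 1).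
Proof.
  intros Hf Hg.
  assert (E1 := RInt_scal (V := R_CompleteNormedModule) (fun x => minus (f x) (g x)) 0 1 c
                 (ex_RInt_minus (V := R_NormedModule) _ _ _ _ Hf Hg)).
  assert (E2 := RInt_minus (V := R_CompleteNormedModule) f g 0 1 Hf Hg).
  unfold scal, minus, plus, opp in E1, E2; simpl in E1, E2. unfold mult in E1; simpl in E1.
  change (RInt (fun x => c * (f x + - g x)) 0 1 = c * (RInt f 0 1 + - RInt g 0 1)).
  rewrite E1, E2. reflexivity.
Qed.

Lemma cont_pow (f : R -> R) n x : continuous f x -> continuous (fun y => f y ^ n) x.
Proof.
  intros H. apply continuity_pt_filterlim. apply continuity_pt_filterlim in H.
  apply (continuity_pt_comp f (fun y => y ^ n)); auto.
  apply derivable_continuous_pt, derivable_pt_pow.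
Qed.

Theorem proposition3p1
  (k N : nat) (T : R)
  (u ut Pxt Pnl : R -> R -> R)
  (Hk : (1 <= k)%nat) (HN : (1 <= N)%nat)
  (Hu : forall t, 0 <= t <= T -> in_Vh N k (u t))
  (Hut : forall t, 0 <= t <= T -> in_Vh N k (ut t))
  (Hder : forall t x, 0 <= t <= T ->
     deriv_within (fun s => 0 <= s <= T) (fun s => u s x) t (ut t x))
  (Hcont : forall t x, 0 <= t <= T ->
     cont_within (fun s => 0 <= s <= T) (fun s => ut s x) t)
  (HPxt : forall t, 0 <= t <= T -> is_L2proj N k (Derive (ut t)) (Pxt t))
  (HPnl : forall t, 0 <= t <= T ->
     is_L2proj N k (fun x => u t x + / 2 * u t x ^ 2) (Pnl t))
  (Hscheme : forall t, 0 <= t <= T -> forall chi, in_Vh N k chi ->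
     ip (ut t) chi + ip (Pxt t) (Derive chi) = ip (Pnl t) (Derive chi)) :
  forall t, 0 <= t <= T ->
    deriv_within (fun s => 0 <= s <= T) (fun s => mass (u s)) t 0 /\
    deriv_within (fun s => 0 <= s <= T) (fun s => energy (u s)) t 0.
Proof.
  intros t Ht.
  set (F := within (fun s => (0 <= s <= T) /\ s <> t) (locally t)).
  assert (FF : Filter F) by (unfold F; apply within_filter; apply locally_filter).
  assert (FD : F (fun s => (0 <= s <= T) /\ s <> t)).
  { unfold F, within. apply filter_forall. auto. }
  set (Q := fun s x => (u s x - u t x) / (s - t)).
  assert (UCQ : UC F Q (ut t)).
  { intros eps He.
    apply (UC_cells F N (fun s x => Q s x - ut t x) HN); auto.
    intros i Hi e He'.
    apply (cell_unif F (fun s x => Q s x - ut t x) (node N (i - 1)) (node N i) k); auto.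
    - apply node_lt; lia.
    - revert FD. apply filter_imp. intros s [Hs Hst].
           destruct (Hu s Hs) as [_ [_ C1]]; destruct (C1 i Hi) as [l1 [L1 E1]].
           destruct (Hu t Ht) as [_ [_ C2]]; destruct (C2 i Hi) as [l2 [L2 E2]].
           destruct (Hut t Ht) as [_ [_ C3]]; destruct (C3 i Hi) as [l3 [L3 E3]].
           exists (ladd (lscal (/ (s - t)) (ladd l1 (lscal (-1) l2))) (lscal (-1) l3)).
           split.
           - apply ladd_length.
             + rewrite lscal_length. apply ladd_length; [lia|rewrite lscal_length; lia].
             + rewrite lscal_length; lia.
           - intros x Hx. rewrite !ladd_spec, !lscal_spec, ladd_spec, lscal_spec.
             unfold Q. rewrite E1, E2, E3 by exact Hx. field. lra.
    - intros c _ e0 He0.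
      assert (D := proj1 (filterlim_locally _ _) (Hder t c Ht) (mkposreal e0 He0)).
      apply (filter_imp _ _ (fun s H => H)) in D. revert D. apply filter_imp.
      intros s Hs. unfold ball in Hs; simpl in Hs; unfold AbsRing_ball, abs, minus, plus, opp in Hs; simpl in Hs.
      exact Hs. }
  assert (Cu : forall x, continuous (u t) x) by (destruct (Hu t Ht) as [C _]; exact C).
  assert (Cut : forall x, continuous (ut t) x) by (destruct (Hut t Ht) as [C _]; exact C).
  assert (Bu := bnd_cont _ Cu).
  assert (But := bnd_cont _ Cut).
  assert (Usv : UC F (fun s _ => s - t) (fun _ => 0)).
  { intros eps He. unfold F, within. exists (mkposreal eps He). intros y Hy _ x _.
    unfold ball in Hy; simpl in Hy; unfold AbsRing_ball, abs, minus, plus, opp in Hy; simpl in Hy.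
    rewrite Rminus_0_r. exact Hy. }
  assert (exu : forall s, 0 <= s <= T -> ex_RInt (u s) 0 1).
  { intros s Hs. apply ex_cont. destruct (Hu s Hs) as [C _]; exact C. }
  assert (exQ : F (fun s => ex_RInt (Q s) 0 1)).
  { revert FD. apply filter_imp. intros s [Hs Hst].
    assert (E : forall x, / (s - t) * (u s x - u t x) = Q s x) by (intros; unfold Q; field; lra).
    apply (ex_RInt_ext (V := R_NormedModule) (fun x => / (s - t) * (u s x - u t x))).
    - intros x _. apply E.
    - apply ex_RInt_lin; auto. }
  split.
  -
    assert (M0 : RInt (ut t) 0 1 = 0).
    { assert (H := Hscheme t Ht (fun _ => 1) (const_Vh N k 1)).
      rewrite !ip_Dconst in H. unfold ip in H.
      transitivity (RInt (fun x => ut t x * 1) 0 1); [|lra].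
      apply RInt_ext. intros; exact (eq_sym (Rmult_1_r _)). }
    unfold deriv_within.
    apply (filterlim_ext_loc (fun s => RInt (Q s) 0 1)).
    + revert FD. apply filter_imp. intros s [Hs Hst]. unfold mass.
      assert (E : forall x, Q s x = / (s - t) * (u s x - u t x)) by (intros; unfold Q; field; lra).
      rewrite (RInt_ext (Q s) (fun x => / (s - t) * (u s x - u t x))).
      * rewrite RInt_lin by auto. change (@eq R (/ (s - t) * (RInt (u s) 0 1 - RInt (u t) 0 1)) ((RInt (u s) 0 1 - RInt (u t) 0 1) / (s - t))). field. lra.
      * intros x _. apply E.
    + replace (locally 0) with (locally (RInt (ut t) 0 1)) by (rewrite M0; reflexivity).
      apply int_lim; auto. apply ex_cont; auto.
  -
    set (g := fun s x => u s x ^ 2 + / 3 * u s x ^ 3).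
    assert (exg : forall s, 0 <= s <= T -> ex_RInt (g s) 0 1).
    { intros s Hs. apply ex_cont. destruct (Hu s Hs) as [C _]. intros x. unfold g.
      apply (continuous_plus (fun y => u s y ^ 2) (fun y => / 3 * u s y ^ 3)).
      - apply cont_pow, C.
      - apply (continuous_mult (fun _ => / 3) (fun y => u s y ^ 3)).
        + apply continuity_pt_filterlim. apply continuity_pt_const. intros a b; reflexivity.
        + apply cont_pow, C. }
    set (Fs := fun s x => / 2 * / (s - t) * (g s x - g t x)).
    set (w := fun x => u t x + / 2 * u t x ^ 2).
    set (h := fun x => ut t x * w x).
    assert (UD := UC_mult F _ _ _ _ Usv UCQ (bnd_const 0) But).
    assert (B0 := bnd_mult _ _ (bnd_const 0) But).
    assert (UB := UC_plus F _ _ _ _ (UC_const F (u t))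
                   (UC_plus F _ _ _ _ (UC_mult F _ _ _ _ (UC_const F (fun _ => / 2)) UD (bnd_const _) B0)
                     (UC_mult F _ _ _ _ (UC_const F (fun _ => / 6))
                       (UC_plus F _ _ _ _
                          (UC_plus F _ _ _ _ (UC_const F (fun x => 3 * (u t x * u t x)))
                             (UC_mult F _ _ _ _ (UC_const F (fun x => 3 * u t x)) UD
                                (bnd_mult _ _ (bnd_const 3) Bu) B0))
                          (UC_mult F _ _ _ _ UD UD B0 B0))
                       (bnd_const _)
                       (bnd_plus _ _ (bnd_plus _ _ (bnd_mult _ _ (bnd_const 3) (bnd_mult _ _ Bu Bu))
                                         (bnd_mult _ _ (bnd_mult _ _ (bnd_const 3) Bu) B0))
                                     (bnd_mult _ _ B0 B0))))).
    assert (UE := UC_mult F _ _ _ _ UCQ UB But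
                   (bnd_plus _ _ Bu (bnd_plus _ _ (bnd_mult _ _ (bnd_const _) B0)
                     (bnd_mult _ _ (bnd_const _)
                       (bnd_plus _ _ (bnd_plus _ _ (bnd_mult _ _ (bnd_const 3) (bnd_mult _ _ Bu Bu))
                                         (bnd_mult _ _ (bnd_mult _ _ (bnd_const 3) Bu) B0))
                                     (bnd_mult _ _ B0 B0)))))).
    cbv beta in UE.
    assert (UF : UC F Fs h).
    { pose proof (fun H => UC_ext_h F _ _ h H UE) as UE2.
      assert (UE3 := UE2 ltac:(intros x Hx; cbv beta; unfold h, w; field)).
      refine (UC_ext F _ Fs h _ UE3).
      revert FD. apply filter_imp. intros s [Hs Hst] x Hx.
      unfold Fs, g, Q. field. lra. }
    assert (H0 : RInt h 0 1 = 0).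
    { change (ip (ut t) w = 0).
      destruct (HPnl t Ht) as [HVn Hpn]. destruct (HPxt t Ht) as [HVx Hpx].
      assert (A1 := Hpn (ut t) (Hut t Ht)).
      assert (A2 := Hscheme t Ht (Pnl t) HVn).
      assert (A3 := skew_self N k (Pnl t) HN HVn).
      assert (A4 := Hpx (ut t) (Hut t Ht)).
      assert (A5 := skew_self N k (ut t) HN (Hut t Ht)).
      assert (A6 := Hscheme t Ht (Pxt t) HVx).
      assert (A7 := skew_self N k (Pxt t) HN HVx).
      assert (A8 := skew N k (Pnl t) (Pxt t) HN HVn HVx).
      assert (S1 := ip_sym (ut t) w).
      assert (S2 := ip_sym (Pnl t) (ut t)).
      assert (S3 := ip_sym (Derive (ut t)) (ut t)).
      assert (S4 := ip_sym (ut t) (Pxt t)).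
      assert (S5 := ip_sym (Pxt t) (Derive (Pnl t))).
      fold w in A1. lra. }
    unfold deriv_within.
    apply (filterlim_ext_loc (fun s => RInt (Fs s) 0 1)).
    + revert FD. apply filter_imp. intros s [Hs Hst]. unfold energy.
      unfold Fs. rewrite RInt_lin by auto.
      change (@eq R (/ 2 * / (s - t) * (RInt (g s) 0 1 - RInt (g t) 0 1))
                   ((/ 2 * RInt (g s) 0 1 - / 2 * RInt (g t) 0 1) / (s - t))). field. lra.
    + replace (locally 0) with (locally (RInt h 0 1)) by (rewrite H0; reflexivity).
      apply int_lim; auto.
      * revert FD. apply filter_imp. intros s [Hs Hst]. unfold Fs. apply ex_RInt_lin; auto.
      * apply ex_cont. intros x. unfold h, w.
        apply (continuous_mult (ut t) (fun y => u t y + / 2 * u t y ^ 2)); [apply Cut|].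
        apply (continuous_plus (u t) (fun y => / 2 * u t y ^ 2)); [apply Cu|].
        apply (continuous_mult (fun _ => / 2) (fun y => u t y ^ 2)).
        -- apply continuity_pt_filterlim. apply continuity_pt_const. intros a b; reflexivity.
        -- apply cont_pow, Cu.
Qed.
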